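(* Let $\alpha,\beta,\gamma$ be partitions with $\alpha_1\le 2$ and let $\Gamma$ be an LR-tableau of type $(\alpha,\beta,\gamma)$; let $x$ be the number of entries $1$ in $\Gamma$. Assume: (1) the number of entries $2$ in $\Gamma$ equals $x$ or $x-1$; (2) every row of $\Gamma$ contains at most one (non-empty) box; (3) if row $j$ contains an entry $2$ and row $i$ contains an entry $1$, then $j>i$. Then there is a bijection between $\mathcal D_\Gamma$ and the set $S_x$ of permutations of $x$ elements.
   Context: For a partition $\lambda$, $\lambda'$ is its conjugate; the diagram of $\lambda$ is drawn with $\lambda'_i$ boxes in row $i$, so the $i$-th row of $\beta\setminus\gamma$ consists of the boxes in columns $\gamma'_i+1,\dots,\beta'_i$. With $\alpha_1\le2$, $\alpha'=(\alpha'_1,\alpha'_2)$. An LR-tableau of type $(\alpha,\beta,\gamma)$ is a filling of $\beta\setminus\gamma$ with $\alpha'_1$ entries $1$ and $\alpha'_2$ entries $2$, weakly increasing along rows, strictly increasing down columns, such that for each $c\ge0$ the number of entries $1$ in columns to the right of column $c$ is at least the number of entries $2$ there. An arc is a pair $(m,n)$, $m>n$ positive integers (source $m$, target $n$); a pole at $n$ is regarded as an arc $(\infty,n)$. An arc diagram of type $(\alpha,\beta,\gamma)$ is a finite multiset of $\alpha'_2$ arcs and $\alpha'_1-\alpha'_2$ poles with, for each $i$, exactly $\beta'_i-\gamma'_i$ members having source or target $i$. It has LR type $\Gamma$ if for each $i$ the number of arcs with source $i$ equals the number of entries $2$ in row $i$ of $\Gamma$; $\mathcal D_\Gamma$ is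 the set of arc diagrams of type $(\alpha,\beta,\gamma)$ of LR type $\Gamma$. *)

(* Defs.v *)
From mathcomp Require Import all_boot all_fingroup.
From mathcomp.finmap Require Import finmap multiset.

Set Implicit Arguments.
Unset Strict Implicit.
Unset Printing Implicit Defensive.
Open Scope mset_scope.
Open Scope nat_scope.

Definition is_partition (l : seq nat) : bool :=
  sorted geq l && all (fun p => 0 < p) l.

(* lambda_c, 1-indexed (0 beyond the length). *)
Definition part (l : seq nat) (c : nat) : nat := nth 0 l c.-1.

Definition conj (l : seq nat) (i : nat) : nat := count (fun p => i <= p) l.

Definition subpartition (g b : seq nat) : Prop :=
  forall c, 0 < c -> part g c <= part b c.

(* The box (i, c) (row i, column c, both >= 1) lies in beta \ gamma:
   row i consists of the columns gamma'_i + 1, ..., beta'_i. *)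
Definition in_skew (b g : seq nat) (i c : nat) : bool :=
  (0 < i) && (conj g i < c <= conj b i).

Definition skew_bound (b : seq nat) : nat := sumn b + size b.
Definition skew_boxes (b g : seq nat) : seq (nat * nat) :=
  [seq ic <- [seq (i, c) | i <- iota 1 (skew_bound b), c <- iota 1 (skew_bound b)]
   | in_skew b g ic.1 ic.2].

(* A filling of beta \ gamma is a function T : row -> column -> entry;
   only its values on the boxes of beta \ gamma are relevant. *)
Definition filling := nat -> nat -> nat.

Definition num_entries (b g : seq nat) (T : filling) (v : nat) : nat :=
  count (fun ic => T ic.1 ic.2 == v) (skew_boxes b g).

Definition num_entries_row (b g : seq nat) (T : filling) (v i : nat) : nat :=
  count (fun ic => (ic.1 == i) && (T ic.1 ic.2 == v)) (skew_boxes b g).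

Definition num_entries_right (b g : seq nat) (T : filling) (v c : nat) : nat :=
  count (fun ic => (c < ic.2) && (T ic.1 ic.2 == v)) (skew_boxes b g).

Definition a1 (a : seq nat) : nat := conj a 1.
Definition a2 (a : seq nat) : nat := conj a 2.

Definition is_LR_tableau (a b g : seq nat) (T : filling) : Prop :=
  subpartition g b /\
  (forall i c, in_skew b g i c -> T i c = 1 \/ T i c = 2) /\
  num_entries b g T 1 = a1 a /\
  num_entries b g T 2 = a2 a /\
  (forall i c, in_skew b g i c -> in_skew b g i c.+1 -> T i c <= T i c.+1) /\
  (forall i c, in_skew b g i c -> in_skew b g i.+1 c -> T i c < T i.+1 c) /\
  (forall c, num_entries_right b g T 2 c <= num_entries_right b g T 1 c).

(* Arcs: (Some m, n) is the arc (m, n) (source m, target n); (None, n) is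
   the pole at n, i.e. the arc (infinity, n). *)
Definition arcD := (option nat * nat)%type.

Definition is_arc (e : arcD) : bool :=
  match e with
  | (Some m, n) => (0 < n) && (n < m)
  | (None, n) => 0 < n
  end.

Definition is_pole (e : arcD) : bool := e.1 == None.

Definition has_source (i : nat) (e : arcD) : bool := e.1 == Some i.
Definition touches (i : nat) (e : arcD) : bool := has_source i e || (e.2 == i).

(* Members of a multiset are counted with multiplicity via enum_mset. *)
Definition is_arc_diagram (a b g : seq nat) (D : {mset arcD}) : Prop :=
  [/\ all is_arc (enum_mset D),
      count (fun e => ~~ is_pole e) (enum_mset D) = a2 a,
      count is_pole (enum_mset D) = a1 a - a2 a
    & forall i, 0 < i -> count (touches i) (enum_mset D) = conj b i - conj g i].

Definition in_D_Gamma (a b g : seq nat) (T : filling) (D : {mset arcD}) : Prop :=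
  is_arc_diagram a b g D /\
  forall i, 0 < i -> count (has_source i) (enum_mset D) = num_entries_row b g T 2 i.

(* Main.v *)
Require Import Defs.
From mathcomp Require Import all_boot all_fingroup.
From mathcomp.finmap Require Import finmap multiset.
From mathcomp Require Import zify.
From Stdlib Require Import Lia ProofIrrelevance.
Open Scope mset_scope.
Open Scope nat_scope.
Set Implicit Arguments.
Unset Strict Implicit.

Lemma in_sumn (s : seq nat) p : p \in s -> p <= sumn s.
Proof.
elim: s => //= q s IH; rewrite in_cons => /orP [/eqP -> | /IH]; first exact: leq_addr.
move=> H; exact: (leq_trans H (leq_addl _ _)).
Qed.

Lemma mem_skew_boxes b g i c : ((i, c) \in skew_boxes b g) = in_skew b g i c.
Proof.
rewrite /skew_boxes mem_filter /=.
case H: (in_skew b g i c) => //=.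
move: H; rewrite /in_skew => /andP [i0 /andP [c1 c2]].
have cb : 0 < conj b i by apply: leq_trans (leq_ltn_trans (leq0n _) c1) c2.
have csz : conj b i <= size b by rewrite /conj count_size.
move: cb; rewrite /conj -has_count => /hasP [p pb ip].
apply/allpairsP; exists (i, c) => /=; split => //; rewrite mem_iota /skew_bound.
- rewrite i0 /= add1n ltnS.
  by rewrite (leq_trans ip) // (leq_trans (@in_sumn _ _ pb)) // leq_addr.
- rewrite (leq_ltn_trans (leq0n _) c1) /= add1n ltnS.
  apply: (leq_trans _ (leq_addl _ _)); exact: leq_trans c2 csz.
Qed.

Lemma uniq_skew_boxes b g : uniq (skew_boxes b g).
Proof.
rewrite /skew_boxes; apply: filter_uniq; apply: allpairs_uniq; try exact: iota_uniq.
by move=> [? ?] [? ?] _ _ /= [-> ->].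
Qed.
Section Structure.
Variables (b g : seq nat) (T : filling).
Hypothesis Hbox : forall i, 0 < i -> conj b i - conj g i <= 1.
Hypothesis Hval : forall i c, in_skew b g i c -> T i c = 1 \/ T i c = 2.

Definition Rw (v : nat) : seq nat :=
  [seq ic.1 | ic <- skew_boxes b g & T ic.1 ic.2 == v].

Lemma memRP v i : reflect (exists c, in_skew b g i c /\ T i c = v) (i \in Rw v).
Proof.
apply: (iffP mapP).
- move=> [[i' c]]; rewrite mem_filter /= mem_skew_boxes => /andP [/eqP Tv sk] ->.
  by exists c.
- move=> [c [sk Tv]]; exists (i, c) => //.
  by rewrite mem_filter /= mem_skew_boxes sk Tv eqxx.
Qed.

Lemma box_unique i c c' : in_skew b g i c -> in_skew b g i c' -> c = c'.
Proof.
rewrite /in_skew => /andP [i0 /andP [h1 h2]] /andP [_ /andP [h3 h4]].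
have := Hbox i0; lia.
Qed.

Lemma uniq_Rw v : uniq (Rw v).
Proof.
rewrite /Rw map_inj_in_uniq; first by apply: filter_uniq; apply: uniq_skew_boxes.
move=> [i c] [i' c']; rewrite !mem_filter /=.
move=> /and3P [_ s1 _] /and3P [_ s2 _] /= ii; move: s1 s2; rewrite ii => s1 s2.
by rewrite (box_unique s1 s2).
Qed.

Lemma size_Rw v : size (Rw v) = num_entries b g T v.
Proof. by rewrite /Rw size_map size_filter. Qed.

Lemma Rw_pos v i : i \in Rw v -> 0 < i.
Proof. by move=> /memRP [c [/andP [] ]]. Qed.

Lemma Rw12 i : i \in Rw 1 -> i \in Rw 2 -> False.
Proof.
move=> /memRP [c [s1 T1]] /memRP [c' [s2 T2]].
move: T2; rewrite -(box_unique s1 s2) T1 //.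
Qed.

Lemma diff_eq i : 0 < i -> conj b i - conj g i = (i \in Rw 1) + (i \in Rw 2).
Proof.
move=> i0.
have hb := Hbox i0.
case E1: (i \in Rw 1); case E2: (i \in Rw 2).
- by case: (Rw12 (idP E1) (idP E2)).
- move: E1 => /memRP [c [/andP [_ /andP [h1 h2]] _]]; lia.
- move: E2 => /memRP [c [/andP [_ /andP [h1 h2]] _]]; lia.
- case: (ltnP (conj g i) (conj b i)) => h; last by apply/eqP; rewrite subn_eq0.
  have sk : in_skew b g i (conj b i) by rewrite /in_skew i0 h leqnn.
  case: (Hval sk) => Tv.
  + by move: E1; have -> : i \in Rw 1 by apply/memRP; exists (conj b i).
  + by move: E2; have -> : i \in Rw 2 by apply/memRP; exists (conj b i).
Qed.

Lemma row2 i : num_entries_row b g T 2 i = (i \in Rw 2).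
Proof.
rewrite /num_entries_row -count_uniq_mem ?uniq_Rw // /Rw count_map count_filter.
by apply: eq_count => -[i' c] /=; rewrite andbC eq_sym.
Qed.

End Structure.

Lemma count_touches (l : seq arcD) i : all is_arc l ->
  count (touches i) l = count (has_source i) l + count (fun e => e.2 == i) l.
Proof.
elim: l => //= -[[m|] n] l IH /andP [ar al]; rewrite IH //;
  rewrite /touches /has_source /=.
- have : (Some m == Some i) && (n == i) = false.
    case: (eqVneq n i) => [ni|]; last by rewrite andbF.
    move: ar; rewrite /= ni => /andP [_ im]; apply/negbTE.
    by rewrite negb_and; apply/orP; left; apply/eqP => -[mi]; move: im; rewrite mi ltnn.
  move: (Some m == Some i) (n == i) => [] [] //= _; lia.
- move: (n == i) => [] /=; lia.
Qed.

Lemma two_count (p : pred arcD) (l : seq arcD) e e' :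
  e \in l -> e' \in l -> e != e' -> p e -> p e' -> 1 < count p l.
Proof.
move=> el el' ne pe pe'.
have h1 : 0 < count (pred1 e) l by rewrite -has_count has_pred1.
have h2 : 0 < count (pred1 e') l by rewrite -has_count has_pred1.
have h3 : count (predI (pred1 e) (pred1 e')) l = 0.
  apply/eqP; rewrite -leqn0 leqNgt -has_count; apply/hasP => -[z _ /= /andP [/eqP -> /eqP]].
  by move/eqP: ne.
have := count_predUI (pred1 e) (pred1 e') l; rewrite h3 addn0 => E.
have : count (predU (pred1 e) (pred1 e')) l <= count p l.
  by apply: sub_count => z /= /orP [] /eqP ->.
lia.
Qed.

Section Construction.
Variables (a b g : seq nat) (T : filling).
Hypothesis Hbox : forall i, 0 < i -> conj b i - conj g i <= 1.
Hypothesis Hval : forall i c, in_skew b g i c -> T i c = 1 \/ T i c = 2.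
Hypothesis Hord : forall i j, i \in Rw b g T 1 -> j \in Rw b g T 2 -> i < j.
Local Notation x := (num_entries b g T 1).
Local Notation y := (num_entries b g T 2).
Hypothesis Hxy : y = x \/ y = x.-1.
Hypothesis Ha1 : a1 a = x.
Hypothesis Ha2 : a2 a = y.
Local Notation R1 := (Rw b g T 1).
Local Notation R2 := (Rw b g T 2).

Lemma y_le_x : y <= x.
Proof. case: Hxy => ->; [exact: leqnn | exact: leq_pred]. Qed.

Lemma map_cst (A B : Type) (c : B) (l : seq A) : map (fun _ => c) l = nseq (size l) c.
Proof. by elim: l => //= ? ? ->. Qed.

Definition src (k : nat) : option nat := if k < y then Some (nth 0 R2 k) else None.

Lemma src_inj k k' : k < x -> k' < x -> src k = src k' -> k = k'.
Proof.
rewrite /src => kx kx'; case: ifP => ky; case: ifP => ky' //.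
- move=> [] /eqP; rewrite nth_uniq ?size_Rw //; first by move/eqP.
  exact: uniq_Rw.
- move=> _; move: ky ky' => /negbT ky /negbT ky'; case: Hxy; lia.
Qed.

Definition Lmap (s : {perm 'I_x}) : seq arcD :=
  [seq (src (val k), nth 0 R1 (s k)) | k : 'I_x <- enum 'I_x].

Lemma fst_L s : map fst (Lmap s) = map Some R2 ++ nseq (x - y) None.
Proof.
have -> : map fst (Lmap s) = map src (map val (enum 'I_x)) by rewrite /Lmap -!map_comp.
rewrite val_enum_ord -(subnKC y_le_x) iotaD map_cat add0n subnKC ?y_le_x //.
congr (_ ++ _).
- rewrite -[in RHS](mkseq_nth 0 R2) size_Rw /mkseq -map_comp.
  apply/eq_in_map => k; rewrite mem_iota /= /src add0n => -> //.
- have -> : map src (iota y (x - y)) = map (fun _ => None) (iota y (x - y)).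
    by apply/eq_in_map => k; rewrite mem_iota /src => /andP [h _]; rewrite ltnNge h.
  by rewrite map_cst size_iota.
Qed.

Lemma snd_L s : perm_eq (map snd (Lmap s)) R1.
Proof.
have -> : map snd (Lmap s) = map (nth 0 R1 \o val) (map s (enum 'I_x)).
  by rewrite /Lmap -!map_comp.
have P : perm_eq (map s (enum 'I_x)) (enum 'I_x).
  apply: uniq_perm; first by rewrite (map_inj_uniq (@perm_inj _ s)) enum_uniq.
    exact: enum_uniq.
  move=> j; rewrite mem_enum; apply/mapP; exists ((s^-1)%g j); first by rewrite mem_enum.
  by rewrite permKV.
apply: (perm_trans (perm_map _ P)).
rewrite map_comp val_enum_ord -{2}(mkseq_nth 0 R1) size_Rw.
exact: perm_refl.
Qed.

Lemma count_fst (L : seq arcD) (p : pred (option nat)) :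
  count (fun e => p e.1) L = count p (map fst L).
Proof. by rewrite count_map. Qed.

Lemma count_snd (L : seq arcD) (p : pred nat) :
  count (fun e => p e.2) L = count p (map snd L).
Proof. by rewrite count_map. Qed.

Lemma allL s : all is_arc (Lmap s).
Proof.
apply/allP => e /mapP [k _ ->] /=.
have t1 : nth 0 R1 (s k) \in R1 by apply: mem_nth; rewrite size_Rw.
rewrite /src; case: ifP => ky /=.
- have t2 : nth 0 R2 k \in R2 by apply: mem_nth; rewrite size_Rw.
  by rewrite (Rw_pos t1) (Hord t1 t2).
- exact: (Rw_pos t1).
Qed.

Lemma valid s : in_D_Gamma a b g T (seq_mset (Lmap s)).
Proof.
have PL := perm_eq_seq_mset (Lmap s).
have cnt : forall p, count p (seq_mset (Lmap s)) = count p (Lmap s).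
  by move=> p; apply: (seq.permP PL).
split; [split|].
- by rewrite (perm_all _ PL) allL.
- rewrite cnt Ha2 (count_fst _ (fun o => o != None)) fst_L count_cat count_nseq /=.
  rewrite count_map mul0n addn0 -size_Rw -[RHS](count_predT (Rw _ _ _ 2)).
  by apply: eq_count.
- rewrite cnt Ha2 Ha1 (count_fst _ (fun o => o == None)) fst_L count_cat count_nseq /=.
  rewrite count_map mul1n (@eq_count _ _ pred0) ?count_pred0 //.
- move=> i i0; rewrite cnt count_touches ?allL // (diff_eq Hbox Hval i0) addnC.
  rewrite /has_source (count_fst _ (fun o => o == Some i)) fst_L count_cat count_nseq /=.
  rewrite count_map mul0n addn0 (count_snd _ (fun n => n == i)).
  rewrite (seq.permP (snd_L s)) count_uniq_mem ?uniq_Rw //.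
  congr (_ + _); rewrite -count_uniq_mem ?uniq_Rw //.
- move=> i i0; rewrite cnt (@row2 b g T Hbox).
  rewrite /has_source (count_fst _ (fun o => o == Some i)) fst_L count_cat count_nseq /=.
  rewrite count_map mul0n addn0 -count_uniq_mem ?uniq_Rw //.
Qed.

Lemma L_inj s s' : seq_mset (Lmap s) = seq_mset (Lmap s') -> s = s'.
Proof.
move/eq_seq_msetP => P; apply/permP => k.
have : (src k, nth 0 R1 (s k)) \in Lmap s'.
  by rewrite -(perm_mem P); apply: (map_f (fun k : 'I_x => (src (val k), nth 0 R1 (s k)))); rewrite mem_enum.
case/mapP => k' _ [/src_inj e1 e2].
have kk : k = k' by apply/val_inj/(e1 (ltn_ord k) (ltn_ord k')).
subst k'; apply/val_inj/eqP.
rewrite -(nth_uniq 0 _ _ (@uniq_Rw b g T Hbox 1)).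
all: try by rewrite size_Rw ltn_ord.
by apply/eqP; exact: e2.
Qed.

Section Surj.
Variable D : {mset arcD}.
Hypothesis HD : in_D_Gamma a b g T D.
Local Notation l := (enum_mset D).

Lemma tgt_R1 o n : (o, n) \in l -> n \in R1.
Proof.
case: HD => [[allD cnp cp ct] cs] el.
have ar : is_arc (o, n) := allP allD _ el.
have n0 : 0 < n by move: ar; case: o {el} => [m|] //= /andP [].
have c1 : 0 < count (touches n) l.
  by rewrite -has_count; apply/hasP; exists (o, n) => //; rewrite /touches eqxx orbT.
move: c1; rewrite ct // (diff_eq Hbox Hval n0).
case E1: (n \in R1) => //; case E2: (n \in R2) => //= _.
have : 0 < count (has_source n) l by rewrite cs // (@row2 b g T Hbox) E2.
rewrite -has_count => /hasP [e' e'l se'].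
have ne : (o, n) != e'.
  apply/eqP => ee; move: se'; rewrite -ee /has_source /=.
  move: ar; case: o {el ee} => [m|] //= /andP [_ nm] /eqP [mn].
  by move: nm; rewrite mn ltnn.
have := two_count el e'l ne (p := touches n).
rewrite ct // (diff_eq Hbox Hval n0) E1 E2 /touches /= eqxx orbT; apply => //.
by rewrite se'.
Qed.

Lemma has_src (k : 'I_x) : has (fun e : arcD => e.1 == src k) l.
Proof.
case: HD => [[allD cnp cp ct] cs].
rewrite /src; case: ifP => ky.
- have t2 : nth 0 R2 k \in R2 by apply: mem_nth; rewrite size_Rw.
  have := cs _ (Rw_pos t2); rewrite (@row2 b g T Hbox) t2 => c.
  rewrite has_count; change (0 < count (has_source (nth 0 R2 k)) l); by rewrite c.
- rewrite has_count; change (0 < count is_pole l); rewrite cp Ha1 Ha2.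
  have := ltn_ord k; move: ky => /negbT; lia.
Qed.

Definition ek (k : 'I_x) : arcD := nth (None, 0) l (find (fun e : arcD => e.1 == src k) l).

Lemma ek_in k : ek k \in l.
Proof. by apply: mem_nth; rewrite -has_find has_src. Qed.

Lemma ek_src k : (ek k).1 = src k.
Proof. exact: (eqP (nth_find _ (has_src k))). Qed.

Lemma ek_tgt k : (ek k).2 \in R1.
Proof. have := ek_in k; case: (ek k) => o n; exact: tgt_R1. Qed.

Lemma sfun_lt k : index (ek k).2 R1 < x.
Proof. by rewrite -(size_Rw b g T 1) index_mem ek_tgt. Qed.

Definition sfun (k : 'I_x) : 'I_x := Ordinal (sfun_lt k).

Lemma sfun_inj : injective sfun.
Proof.
move=> k k' /(congr1 val) /= ii.
have e2 : (ek k).2 = (ek k').2.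
  by rewrite -(nth_index 0 (ek_tgt k)) ii nth_index ?ek_tgt.
case: (eqVneq k k') => // nk; exfalso.
have ne : ek k != ek k'.
  apply/eqP => E; have := congr1 fst E; rewrite !ek_src => /src_inj H.
  by move: nk; rewrite (val_inj (H (ltn_ord k) (ltn_ord k'))) eqxx.
have n0 : 0 < (ek k).2 := Rw_pos (ek_tgt k).
have := two_count (ek_in k) (ek_in k') ne (p := touches (ek k).2).
case: HD => [[allD cnp cp ct] cs].
rewrite ct // /touches eqxx orbT e2 eqxx orbT => /(_ isT isT).
have := Hbox n0; rewrite e2; lia.
Qed.

Definition sperm : {perm 'I_x} := perm sfun_inj.

Lemma surj : seq_mset (Lmap sperm) = D.
Proof.
rewrite -[RHS]seq_mset_id; apply/eq_seq_msetP.
have sub : {subset Lmap sperm <= l}.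
  move=> e /mapP [k _ ->]; rewrite permE /= nth_index ?ek_tgt //.
  by rewrite -ek_src -surjective_pairing ek_in.
have U : uniq (Lmap sperm).
  rewrite map_inj_uniq ?enum_uniq // => k k' /(congr1 fst) /= /src_inj H.
  exact: (val_inj (H (ltn_ord k) (ltn_ord k'))).
have sz : size l = size (Lmap sperm).
  case: HD => [[allD cnp cp ct] cs].
  rewrite size_map size_enum_ord -(count_predC is_pole l).
  change (count is_pole l + count (fun e => ~~ is_pole e) l = x).
  by rewrite cp cnp Ha1 Ha2 subnK // y_le_x.
have [_ eqi] := uniq_min_size U sub (eq_leq sz).
apply: uniq_perm => //; by rewrite (uniq_size_uniq U eqi) sz.
Qed.

End Surj.

End Construction.
Theorem mainTheorem6 (a b g : seq nat) (T : filling) :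
  is_partition a -> is_partition b -> is_partition g ->
  all (fun p => p <= 2) a ->
  is_LR_tableau a b g T ->
  let x := num_entries b g T 1 in
  (num_entries b g T 2 = x \/ num_entries b g T 2 = x.-1) ->
  (forall i, 0 < i -> conj b i - conj g i <= 1) ->
  (forall i j c d, in_skew b g j c -> T j c = 2 ->
                   in_skew b g i d -> T i d = 1 -> i < j) ->
  exists f : {perm 'I_x} -> {D : {mset arcD} | in_D_Gamma a b g T D},
    bijective f.
Proof.
move=> _ _ _ _ [_ [Hval [Hn1 [Hn2 _]]]] x Hxy Hbox Hord0.
subst x.
have Hord : forall i j, i \in Rw b g T 1 -> j \in Rw b g T 2 -> i < j.
  move=> i j /memRP [d [s1 t1]] /memRP [c [s2 t2]]; exact: Hord0 s2 t2 s1 t1.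
have V := valid Hbox Hval Hord Hxy (esym Hn1) (esym Hn2).
exists (fun s => exist _ _ (V s)).
pose gi := fun D : {D : {mset arcD} | in_D_Gamma a b g T D} =>
  sperm Hbox Hval Hxy (esym Hn1) (esym Hn2) (proj2_sig D).
apply: (@Bijective _ _ _ gi).
- move=> s; apply: (L_inj Hbox Hxy (esym Hn1) (esym Hn2)).
  by rewrite /gi /= surj.
- move=> [D pD]; rewrite /gi /=.
  have E := surj Hbox Hval Hxy (esym Hn1) (esym Hn2) pD.
  move: (V _); rewrite E => p; congr exist; exact: proof_irrelevance.
Qed.
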